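(* For every integer $k\ge1$, $$\sum_{j=0}^{\lfloor\frac{k-1}{2}\rfloor}(k-2j)\binom{k}{j}^2=k\binom{k-1}{\lfloor\frac{k-1}{2}\rfloor}^2.$$ *)

(* Defs.v *)
From mathcomp Require Import all_boot.

(* Main.v *)
Require Import Defs.
From mathcomp Require Import all_boot.
From mathcomp Require Import zify.

Lemma partial (k m : nat) : 1 <= k -> 2 * m <= k - 1 ->
  \sum_(0 <= j < m.+1) (k - 2 * j) * 'C(k, j) ^ 2 = k * 'C(k - 1, m) ^ 2.
Proof.
move=> hk; elim: m => [|m IH] hm.
  by rewrite big_nat1 !bin0 muln0 subn0.
rewrite big_nat_recr //= IH; last by lia.
have e1 := mul_bin_diag k m.
have e2 := mul_bin_down k m.+1.
have hk1 : k.-1 = k - 1 by lia.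
rewrite hk1 in e1 e2.
set a := 'C(k - 1, m) in e1 *; set b := 'C(k - 1, m.+1) in e2 *;
set c := 'C(k, m.+1) in e1 e2 *.
apply/eqP; rewrite -(eqn_pmul2l hk); apply/eqP.
have -> : k * (k * a ^ 2 + (k - 2 * m.+1) * c ^ 2) =
  (k * a) ^ 2 + k * (k - 2 * m.+1) * c ^ 2 by rewrite expnMn; lia.
have -> : k * (k * b ^ 2) = (k * b) ^ 2 by rewrite expnMn; lia.
rewrite e1 e2 !expnMn.
have -> : k * (k - 2 * m.+1) = (k - m.+1) ^ 2 - m.+1 ^ 2 by nia.
rewrite mulnBl subnKC //; apply: leq_mul => //; rewrite leq_exp2r //; lia.
Qed.

Theorem lemma3p5 (k : nat) (hk : 1 <= k) :
  \sum_(0 <= j < ((k - 1) %/ 2).+1) (k - 2 * j) * 'C(k, j) ^ 2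
  = k * 'C(k - 1, (k - 1) %/ 2) ^ 2.
Proof.
by apply: partial => //; rewrite mulnC leq_trunc_div.
Qed.
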